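(* Let $G=(V,E,\mathcal{W})$ be a coherent matrix-weighted network as described in the context, and consider the consensus dynamics $\dot{\mathbf{y}}_i=\sum_j w_{ij}(\mathbf{R}_{ij}\mathbf{y}_j-\mathbf{y}_i)$, $i=1,\dots,n$, i.e. $\dot{\mathbf{y}}=-\mathcal{L}\mathbf{y}$ for $\mathbf{y}=(\mathbf{y}_1;\dots;\mathbf{y}_n)$, $\mathbf{y}_i\in\mathbb{R}^{n_d}$, with initial states $\mathbf{y}_i(0)$. Then for each node $v_j$, $\mathbf{y}_j(t)\to\mathbf{y}_j^*$ as $t\to\infty$, where $$\mathbf{y}_j^*=\mathbf{S}_{\sigma(j)1}\,\bar{\mathbf{y}}(0)/n,\qquad \bar{\mathbf{y}}(0)=\sum_{i=1}^n\mathbf{S}_{1\sigma(i)}\mathbf{y}_i(0).$$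
   Context: A matrix-weighted network (MWN) is $G=(V,E,\mathcal{W})$ with node set $V=\{v_1,\dots,v_n\}$ and edge set $E\subset V\times V$, whose underlying graph is connected. For a fixed dimension $n_d$, each ordered pair $(i,j)$ carries $\mathbf{W}_{ij}\in\mathbb{R}^{n_d\times n_d}$, with $\mathbf{W}_{ij}=0$ iff $(v_i,v_j)\notin E$, and $\mathbf{W}_{ij}=\mathbf{W}_{ji}^T$. Write $w_{ij}=\|\mathbf{W}_{ij}\|_2$ and, for edges, $\mathbf{R}_{ij}=\mathbf{W}_{ij}/w_{ij}$ (transformation of the edge; take the term to be zero when $w_{ij}=0$). $\mathcal{W}$ is the $nn_d\times nn_d$ block matrix with blocks $\mathbf{W}_{ij}$; $d_i=\sum_j w_{ij}$, $\mathcal{D}=\mathrm{diag}(d_i)\otimes\mathbf{I}$ ($\mathbf{I}$ the $n_d\times n_d$ identity), $\mathcal{L}=\mathcal{D}-\mathcal{W}$. The transformation of a directed path or cycle with consecutive edges $e_1,\dots,e_k$ is $\mathbf{R}(e_1)\cdots\mathbf{R}(e_k)$; $G$ is coherent if every directed cycle $(v_{i_1},v_{i_2}),\dots,(v_{i_l},v_{i_1})$ ($l\ge2$, distinct nodes) has transformation $\mathbf{I}$. For coherent $G$ there is a partition $\{V_1,\dots,V_{l_p}\}$ of $V$ such that edges inside a part have transformation $\mathbf{I}$, all edges from a part $V_a$ to a part $V_b$ share the same transformation, and every directed cycle of parts (as super nodes) has transformation $\mathbf{I}$. For such a partition, $\sigma(i)$ is the index of the part containing $v_i$, and $\mathbf{S}_{hl}$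 is the transformation of a directed path from a node of $V_h$ to a node of $V_l$. *)

(* Defs.v *)
From HB Require Import structures.
From mathcomp Require Import all_boot all_order all_algebra.
From mathcomp Require Import all_classical all_reals all_analysis.
Set Implicit Arguments. Unset Strict Implicit. Unset Printing Implicit Defensive.
Import Order.TTheory GRing.Theory Num.Theory.
Import numFieldNormedType.Exports.
Local Open Scope classical_set_scope.
Local Open Scope ring_scope.

Section MWN.
Variables (R : realType) (n nd : nat).
Variable W : 'I_n -> 'I_n -> 'M[R]_nd.

Definition vnorm2 (x : 'cV[R]_nd) : R := Num.sqrt (\sum_k (x k 0) ^+ 2).

Definition spec_norm (A : 'M[R]_nd) : R :=
  sup [set vnorm2 (A *m x) | x in [set x : 'cV[R]_nd | vnorm2 x = 1]].

Definition wgt (i j : 'I_n) : R := spec_norm (W i j).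

(* R_ij = W_ij / w_ij  (zero when w_ij = 0, since 0^-1 = 0) *)
Definition Rt (i j : 'I_n) : 'M[R]_nd := (wgt i j)^-1 *: W i j.

Definition edge : rel 'I_n := fun i j => W i j != 0.

(* transformation of a walk given as its node sequence s = [:: i1; ...; ik]:
   R(i1,i2) * R(i2,i3) * ... ; the identity for a single node *)
Definition walk_trans (s : seq 'I_n) : 'M[R]_nd :=
  foldr (fun e M => Rt e.1 e.2 *m M) 1%:M (zip s (behead s)).

Definition dpath (u v : 'I_n) (s : seq 'I_n) : Prop :=
  exists p, [/\ s = u :: p, path edge u p, uniq s & last u p = v].

Definition coherent : Prop :=
  forall (x : 'I_n) (p : seq 'I_n),
    (1 <= size p)%N -> uniq (x :: p) -> cycle edge (x :: p) ->
    walk_trans (x :: rcons p x) = 1%:M.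

Definition connected_graph : Prop := forall u v : 'I_n, connect edge u v.

Definition edges_trans (es : seq ('I_n * 'I_n)) : 'M[R]_nd :=
  foldr (fun e M => Rt e.1 e.2 *m M) 1%:M es.

(* the partition {V_1,...,V_lp} given by sigma : V -> parts (part k = sigma^-1 k),
   with the properties of the context *)
Definition coherent_partition (lp : nat) (sigma : 'I_n -> 'I_lp) : Prop :=
  [/\
      forall k : 'I_lp, exists i, sigma i = k,
      forall i j, edge i j -> sigma i = sigma j -> Rt i j = 1%:M,
      forall i j i' j', edge i j -> edge i' j' -> sigma i = sigma i' ->
        sigma j = sigma j' -> Rt i j = Rt i' j' &
      (* every directed cycle of parts V_{a1} -> ... -> V_{al} -> V_{a1}
         (l >= 2, distinct parts), realised by edges e_k from V_{ak} to V_{a(k+1)},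
         has transformation I *)
      forall es : seq ('I_n * 'I_n),
        (2 <= size es)%N -> all (fun e => edge e.1 e.2) es ->
        uniq [seq sigma e.1 | e <- es] ->
        cycle (fun e f => sigma e.2 == sigma f.1) es ->
        edges_trans es = 1%:M].

Definition part_trans (lp : nat) (sigma : 'I_n -> 'I_lp)
  (S : 'I_lp -> 'I_lp -> 'M[R]_nd) : Prop :=
  forall (h l : 'I_lp) (u v : 'I_n) (s : seq 'I_n),
    sigma u = h -> sigma v = l -> dpath u v s -> walk_trans s = S h l.

(* y solves  dy_i/dt = sum_j w_ij (R_ij y_j - y_i)  for t > 0,
   and is right-continuous at t = 0 (initial state y(0)) *)
Definition consensus_solution (y : R -> 'I_n -> 'cV[R]_nd) : Prop :=
  (forall (i : 'I_n) (t : R), 0 < t ->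
     is_derive t 1 (fun s => y s i)
       (\sum_j wgt i j *: (Rt i j *m y t j - y t i))) /\
  (forall i : 'I_n, y s i @[s --> 0^'+] --> y 0 i).

End MWN.

(* Main.v *)
Require Import Defs.
From HB Require Import structures.
From mathcomp Require Import all_boot all_order all_algebra.
From mathcomp Require Import all_classical all_reals all_analysis.
From mathcomp Require Import lra ring zify.
Import Order.TTheory GRing.Theory Num.Theory.
Import numFieldNormedType.Exports.
Local Open Scope classical_set_scope.
Local Open Scope ring_scope.


Lemma mx_cvg_entries {R : realType} {T} {F : set_system T} {FF : Filter F} m n
  (M : T -> 'M[R]_(m,n)) (L : 'M[R]_(m,n)) :
  (forall i j, M t i j @[t --> F] --> L i j) -> M t @[t --> F] --> L.
Proof.
move=> h; apply/cvgrPdist_le => e e0.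
near=> x.
rewrite /Num.Def.normr/= mx_normrE (bigmax_le _ (ltW e0))//= => i _.
rewrite !mxE/=.
move: i; near: x; apply: filter_forall => /= i.
exact: ((cvgrPdist_le _ _).1 (h i.1 i.2) _ e0).
Unshelve. all: by end_near. Qed.

Lemma cvg_entry {R : realType} {T} {F : set_system T} {FF : Filter F} m n
  (M : T -> 'M[R]_(m,n)) (L : 'M[R]_(m,n)) i j :
  M t @[t --> F] --> L -> M t i j @[t --> F] --> L i j.
Proof.
move=> h; apply/cvgrPdist_le => e e0.
move/cvgrPdist_le : h => /(_ e e0); apply: filterS => x hx.
apply: le_trans hx.
rewrite [leRHS]/Num.Def.normr/= mx_normrE.
apply: le_trans; last exact: (le_bigmax _ _ (i, j)).
by rewrite !mxE.
Qed.

Lemma cvg_sumR {R : realType} {T} {F : set_system T} {FF : Filter F} n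
  (g : 'I_n -> T -> R) (c : 'I_n -> R) :
  (forall l, g l t @[t --> F] --> c l) -> \sum_l g l t @[t --> F] --> \sum_l c l.
Proof.
move=> h.
suff H : forall (r : seq 'I_n),
  (fun t => \sum_(l <- r) g l t) @ F --> \sum_(l <- r) c l by apply: H.
elim => [|l r IH].
  under eq_fun do rewrite big_nil.
  rewrite big_nil; exact: cvg_cst.
under eq_fun do rewrite big_cons.
rewrite big_cons; exact: cvgD.
Qed.

Lemma is_derive_entry {R : realType} m n (M : R -> 'M[R]_(m,n)) (t : R) (dM : 'M[R]_(m,n)) i j :
  is_derive t 1 M dM -> is_derive t 1 (fun s => M s i j) (dM i j).
Proof.
move=> [dM' <-].
have di : derivable (fun s => M s i j) t 1 by move: dM'; rewrite derivable_mxP.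
apply: DeriveDef => //.
by rewrite derive_mx // mxE.
Qed.

Lemma is_derive_sumf {R : realType} n (h : 'I_n -> R -> R) (t : R) (dh : 'I_n -> R) :
  (forall j, is_derive t 1 (h j) (dh j)) ->
  is_derive t 1 (fun s => \sum_j h j s) (\sum_j dh j).
Proof.
move=> H; have := is_derive_sum H.
by rewrite fct_sumE.
Qed.

Lemma is_derive_mulmx_entry {R : realType} p q (E : 'M[R]_(p,q)) (Y : R -> 'cV[R]_q)
  (t : R) (dY : 'cV[R]_q) k : is_derive t 1 Y dY ->
  is_derive t 1 (fun s => (E *m Y s) k 0) ((E *m dY) k 0).
Proof.
move=> hY.
have -> : (fun s => (E *m Y s) k 0) = (fun s => \sum_l E k l *: Y s l 0).
  by apply/funext => s; rewrite mxE.
rewrite mxE; apply: is_derive_sumf => l.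
apply: is_deriveZ; exact: is_derive_entry.
Qed.

Lemma nincr_help {R : realType} (g dg : R -> R) (a : R) :
  (forall t, a < t -> is_derive t 1 g (dg t)) -> g s @[s --> a^'+] --> g a ->
  (forall t, a < t -> dg t <= 0) ->
  forall x y, a <= x -> x <= y -> g y <= g x.
Proof.
move=> hd hc hle; apply: ler0_derive1_nincry.
- by move=> x; rewrite in_itv/= andbT => ax; have [] := hd x ax.
- move=> x; rewrite in_itv/= andbT => ax; rewrite derive1E.
  by have [_ ->] := hd x ax; exact: hle.
- apply/continuous_within_itvcyP; split => // x; rewrite in_itv/= andbT => ax.
  apply/differentiable_continuous/derivable1_diffP; by have [] := hd x ax.
Qed.


Lemma sym_sum0 {R : realType} n (a : 'I_n -> 'I_n -> R) (g : 'I_n -> R) :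
  (forall i j, a i j = a j i) -> \sum_i \sum_j a i j * (g j - g i) = 0.
Proof.
move=> asym.
under eq_bigr do under eq_bigr do rewrite mulrBr.
under eq_bigr do rewrite sumrB.
rewrite sumrB exchange_big /=; apply/eqP; rewrite subr_eq0; apply/eqP.
by apply: eq_bigr => i _; apply: eq_bigr => j _; rewrite asym.
Qed.

Lemma sym_quad {R : realType} n (a : 'I_n -> 'I_n -> R) (h : 'I_n -> R) c :
  (forall i j, a i j = a j i) ->
  \sum_i (2 * (h i - c) * \sum_j a i j * (h j - h i)) =
  - \sum_i \sum_j a i j * (h i - h j) ^+ 2.
Proof.
move=> asym.
set S1 := \sum_i \sum_j a i j * (h i - c) * (h j - h i).
set S2 := \sum_i \sum_j a i j * (h j - c) * (h i - h j).
have E1 : S1 = S2.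
  rewrite /S1 exchange_big /=.
  by apply: eq_bigr => i _; apply: eq_bigr => j _; rewrite asym.
have L : \sum_i (2 * (h i - c) * \sum_j a i j * (h j - h i)) = 2 * S1.
  rewrite /S1 mulr_sumr; apply: eq_bigr => i _.
  rewrite !mulr_sumr; apply: eq_bigr => j _; ring.
have R' : \sum_i \sum_j a i j * (h i - h j) ^+ 2 = - (S1 + S2).
  rewrite /S1 /S2 -big_split -sumrN /=; apply: eq_bigr => i _.
  rewrite -big_split -sumrN /=; apply: eq_bigr => j _; ring.
by rewrite L R' opprK -E1; ring.
Qed.

Lemma term_le_sum2 {R : realType} n (F : 'I_n -> 'I_n -> R) i j :
  (forall i j, 0 <= F i j) -> F i j <= \sum_i \sum_j F i j.
Proof.
move=> F0.
rewrite (bigD1 i) //= (bigD1 j) //= -addrA lerDl.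
by apply: addr_ge0; apply: sumr_ge0 => *; [|apply: sumr_ge0 => *].
Qed.

Lemma poincare {R : realType} n (a : 'I_n -> 'I_n -> R) :
  (forall i j, 0 <= a i j) ->
  (forall u v, connect (fun i j => 0 < a i j) u v) ->
  exists K : R, 0 < K /\ forall g : 'I_n -> R, \sum_j g j = 0 ->
    \sum_j g j ^+ 2 <= K * \sum_i \sum_j a i j * (g i - g j) ^+ 2.
Proof.
move=> apos acon.
set M := \sum_i \sum_j (a i j)^-1.
have M0 : 0 <= M by apply: sumr_ge0 => i _; apply: sumr_ge0 => j _; rewrite invr_ge0.
have n3M : 0 <= n%:R ^+ 3 * M by rewrite mulr_ge0 // exprn_ge0.
exists (n%:R ^+ 3 * M + 1); split; first by lra.
move=> g g0.
set Q := \sum_i \sum_j a i j * (g i - g j) ^+ 2.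
have Q0 : 0 <= Q.
  by apply: sumr_ge0 => i _; apply: sumr_ge0 => j _; rewrite mulr_ge0 // sqr_ge0.
have MQ0 : 0 <= M * Q by rewrite mulr_ge0.
set r := Num.sqrt (M * Q).
have r0 : 0 <= r by rewrite sqrtr_ge0.
have edge_b : forall i j, 0 < a i j -> `|g i - g j| <= r.
  move=> i j aij.
  rewrite -sqrtr_sqr ler_sqrt //.
  have anz : a i j != 0 by rewrite gt_eqF.
  rewrite -(mulKf anz ((g i - g j) ^+ 2)).
  apply: ler_pM.
  - by rewrite invr_ge0 ltW.
  - by rewrite mulr_ge0 ?sqr_ge0 // ltW.
  - have := @term_le_sum2 R n (fun i j => (a i j)^-1) i j; apply => * /=.
    by rewrite invr_ge0.
  - have := @term_le_sum2 R n (fun i j => a i j * (g i - g j) ^+ 2) i j.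
    by apply => * /=; rewrite mulr_ge0 ?sqr_ge0.
have path_b : forall u p, path (fun i j => 0 < a i j) u p ->
    `|g u - g (last u p)| <= (size p)%:R * r.
  move=> u p; elim: p u => [|v p IH] u /=.
    by rewrite subrr normr0 mul0r.
  move=> /andP[uv pv].
  rewrite (_ : g u - g (last v p) = (g u - g v) + (g v - g (last v p))); last by ring.
  apply: (le_trans (ler_normD _ _)).
  have := edge_b u v uv; have := IH v pv.
  rewrite /= -addn1 natrD mulrDl mul1r; lra.
have conn_b : forall u v, `|g u - g v| <= n%:R * r.
  move=> u v; have /connectP [p pth lst] := acon u v.
  case/shortenP: pth lst => p' pth' uq _ lst.
  rewrite lst; apply: (le_trans (path_b _ _ pth')).
  apply: ler_wpM2r => //; rewrite ler_nat.
  have := max_card (mem (u :: p')); rewrite card_ord (card_uniqP uq) /=.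
  by move=> h; apply: ltnW.
have gi_b : forall i, `|g i| <= n%:R * r.
  move=> i.
  have n0 : (0 < n)%N by apply: leq_ltn_trans (ltn_ord i).
  have eq : n%:R * g i = \sum_j (g i - g j).
    by rewrite sumrB g0 subr0 sumr_const card_ord mulr_natl.
  have : `|n%:R * g i| <= n%:R * (n%:R * r).
    rewrite eq; apply: (le_trans (ler_norm_sum _ _ _)).
    have -> : n%:R * (n%:R * r) = \sum_(j < n) (n%:R * r).
      by rewrite sumr_const card_ord mulr_natl.
    by apply: ler_sum => j _; apply: conn_b.
  by rewrite normrM ger0_norm ?ler0n // ler_pM2l // ltr0n.
have gsq : forall j, g j ^+ 2 <= (n%:R * r) ^+ 2.
  move=> j; rewrite -(real_normK (num_real (g j))) !expr2.
  by apply: ler_pM => //; apply: gi_b.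
apply: (le_trans (ler_sum _ (fun j _ => gsq j))).
rewrite sumr_const card_ord exprMn sqr_sqrtr //.
have : 0 <= n%:R ^+ 3 * M * Q by rewrite mulr_ge0.
have -> : (n%:R ^+ 2 * (M * Q)) *+ n = n%:R ^+ 3 * M * Q :> R.
  by rewrite -mulr_natr; ring.
by lra.
Qed.


Lemma is_derive_sq {R : realType} (g : R -> R) (t dg c : R) :
  is_derive t 1 g dg -> is_derive t 1 (fun s => (g s - c) ^+ 2) (2 * (g t - c) * dg).
Proof.
move=> hg.
have h1 : is_derive t 1 (fun s => g s - c) dg.
  apply: is_derive_eq (is_deriveB hg (is_derive_cst c t 1)) _; by rewrite subr0.
apply: is_derive_eq (is_deriveM h1 h1) _.
rewrite /GRing.scale /=; ring.
Qed.

Lemma is_derive_expc {R : realType} (c t : R) :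
  is_derive t 1 (fun s => expR (c * s)) (expR (c * t) * c).
Proof.
have hl : is_derive t 1 (fun s : R => c * s) c.
  apply: is_derive_eq (is_deriveZ c (is_derive_id t 1)) _.
  by rewrite /GRing.scale /= mulr1.
exact: (is_derive1_comp (is_derive_expR (c * t)) hl).
Qed.

Lemma consensus_scalar {R : realType} (n : nat) (a : 'I_n -> 'I_n -> R)
  (f : 'I_n -> R -> R) :
  (forall i j, a i j = a j i) -> (forall i j, 0 <= a i j) ->
  (forall u v, connect (fun i j => 0 < a i j) u v) ->
  (forall i (t : R), 0 < t -> is_derive t 1 (f i) (\sum_j a i j * (f j t - f i t))) ->
  (forall i, f i s @[s --> 0^'+] --> f i 0) ->
  forall i, f i t @[t --> +oo] --> n%:R^-1 * \sum_j f j 0.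
Proof.
move=> asym apos acon hd hc i0.
have n0 : (0 < n)%N by apply: leq_ltn_trans (ltn_ord i0).
set m := n%:R^-1 * \sum_j f j 0.
pose F t := \sum_j f j t.
have dF : forall t : R, 0 < t -> is_derive t 1 F 0.
  move=> t t0; have := @is_derive_sumf R n _ t _ (fun j => hd j t t0).
  by rewrite (@sym_sum0 R n a (fun j => f j t) asym).
have FcR : F s @[s --> 0^'+] --> F 0 by apply: cvg_sumR.
have Fc : forall t : R, 0 <= t -> F t = F 0.
  move=> t t0; apply/eqP; rewrite eq_le; apply/andP; split.
  - apply: (@nincr_help R F (fun _ => 0) 0 _ FcR _ 0 t) => // s s0; exact: dF.
  - rewrite -lerN2.
    apply: (@nincr_help R (fun s => - F s) (fun _ => 0) 0 _ (cvgN FcR) _ 0 t) => //.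
    move=> s s0; apply: is_derive_eq (is_deriveN (dF s s0)) _.
    by rewrite oppr0.
have Fsum : forall t : R, 0 <= t -> \sum_j (f j t - m) = 0.
  move=> t t0; rewrite sumrB sumr_const card_ord.
  have := Fc t t0; rewrite /F => ->.
  rewrite -mulr_natl /m mulrA mulfV ?mul1r ?subrr // pnatr_eq0 -lt0n //.
have [K [K0 HK]] := @poincare R n a apos acon.
pose V t := \sum_j (f j t - m) ^+ 2.
pose Q t := \sum_i \sum_j a i j * (f i t - f j t) ^+ 2.
have dV : forall t : R, 0 < t -> is_derive t 1 V (- Q t).
  move=> t t0.
  have := @is_derive_sumf R n _ t _ (fun j => @is_derive_sq R _ t _ m (hd j t t0)).
  by rewrite (@sym_quad R n a (fun j => f j t) m asym).
have Vle : forall t : R, 0 < t -> V t <= K * Q t.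
  move=> t t0.
  have := HK (fun j => f j t - m) (Fsum t (ltW t0)).
  have -> : Q t = \sum_i \sum_j a i j * ((f i t - m) - (f j t - m)) ^+ 2.
    by apply: eq_bigr => i _; apply: eq_bigr => j _; congr (_ * _ ^+ 2); ring.
  by [].
pose c := K^-1.
have c0 : 0 < c by rewrite invr_gt0.
pose G t := V t * expR (c * t).
have dG : forall t : R, 0 < t -> is_derive t 1 G (expR (c * t) * (c * V t - Q t)).
  move=> t t0.
  apply: is_derive_eq (is_deriveM (dV t t0) (is_derive_expc c t)) _.
  rewrite /GRing.scale /=; ring.
have Gc1 : G s @[s --> 1^'+] --> G 1.
  apply: cvg_at_right_filter; apply: differentiable_continuous.
  by apply/derivable1_diffP; have [] := dG 1 ltr01.
have Gdec : forall t : R, 1 <= t -> G t <= G 1.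
  move=> t t1.
  apply: (@nincr_help R G (fun t => expR (c * t) * (c * V t - Q t)) 1 _ Gc1 _ 1 t) => //.
    by move=> s s1; apply: dG; apply: lt_trans s1.
  move=> s s1; rewrite mulr_ge0_le0 ?expR_ge0 // subr_le0.
  have s0 : 0 < s by apply: lt_trans s1.
  by rewrite /c ler_pdivrMl //; apply: Vle.
apply/cvgrPdist_lt => e e0.
have e20 : 0 < e ^+ 2 by rewrite exprn_gt0.
set C := G 1.
near=> t.
have t1 : 1 < t by near: t; apply: nbhs_pinfty_gt; apply: num_real.
have tC : C / (c * e ^+ 2) < t by near: t; apply: nbhs_pinfty_gt; apply: num_real.
have t0 : 0 < t by apply: lt_trans t1.
have V0 : 0 <= V t by apply: sumr_ge0 => j _; apply: sqr_ge0.
have h1 : V t * (c * t) <= C.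
  apply: le_trans (Gdec t (ltW t1)).
  rewrite /G ler_wpM2l //; apply: le_trans (expR_ge1Dx _); lra.
have h2 : C < t * (c * e ^+ 2) by rewrite -ltr_pdivrMr ?mulr_gt0.
have Vlt : V t < e ^+ 2.
  rewrite ltNge; apply/negP => hV.
  have : e ^+ 2 * (c * t) <= V t * (c * t) by rewrite ler_wpM2r // mulr_ge0 // ltW.
  have -> : e ^+ 2 * (c * t) = t * (c * e ^+ 2) by ring.
  lra.
have hi : (f i0 t - m) ^+ 2 <= V t.
  rewrite /V (bigD1 i0) //= lerDl; apply: sumr_ge0 => j _; apply: sqr_ge0.
rewrite distrC -sqrtr_sqr -(ger0_norm (ltW e0)) -sqrtr_sqr ltr_sqrt //.
exact: le_lt_trans hi Vlt.
Unshelve. all: by end_near. Qed.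


Definition wk {R : realType} {n nd : nat} (W : 'I_n -> 'I_n -> 'M[R]_nd)
  (s : seq 'I_n) : bool :=
  if s is x :: p then path (edge W) x p else false.

Lemma wt_cons {R : realType} {n nd : nat} (W : 'I_n -> 'I_n -> 'M[R]_nd) x y p :
  walk_trans W (x :: y :: p) = Rt W x y *m walk_trans W (y :: p).
Proof. by []. Qed.

Lemma wt_single {R : realType} {n nd : nat} (W : 'I_n -> 'I_n -> 'M[R]_nd) x :
  walk_trans W [:: x] = 1%:M.
Proof. by []. Qed.

Lemma wt_catp {R : realType} {n nd : nat} (W : 'I_n -> 'I_n -> 'M[R]_nd) x p q :
  walk_trans W (x :: p ++ q) = walk_trans W (x :: p) *m walk_trans W (last x p :: q).
Proof.
elim: p x => [|z p IH] x; first by rewrite cat0s wt_single mul1mx.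
by rewrite cat_cons !wt_cons IH mulmxA.
Qed.

Lemma wt_rcons {R : realType} {n nd : nat} (W : 'I_n -> 'I_n -> 'M[R]_nd) x p y :
  walk_trans W (x :: rcons p y) = walk_trans W (x :: p) *m Rt W (last x p) y.
Proof.
by rewrite -cats1 wt_catp wt_cons wt_single mulmx1.
Qed.

Lemma wt_cat {R : realType} {n nd : nat} (W : 'I_n -> 'I_n -> 'M[R]_nd) s1 x s2 :
  walk_trans W (s1 ++ x :: s2) = walk_trans W (rcons s1 x) *m walk_trans W (x :: s2).
Proof.
case: s1 => [|z s1]; first by rewrite cat0s wt_single mul1mx.
by rewrite cat_cons wt_catp wt_cons ?rcons_cons wt_rcons mulmxA.
Qed.

Lemma wk_cat {R : realType} {n nd : nat} (W : 'I_n -> 'I_n -> 'M[R]_nd) s1 x s2 :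
  wk W (s1 ++ x :: s2) = wk W (rcons s1 x) && wk W (x :: s2).
Proof.
case: s1 => [|z s1] //=.
by rewrite cat_path rcons_path /= andbA.
Qed.

Lemma dup_split (T : eqType) (s : seq T) : ~~ uniq s ->
  exists a y b c, s = a ++ y :: b ++ y :: c /\ uniq (y :: b).
Proof.
elim/last_ind: s => [//|t x IH].
rewrite rcons_uniq negb_and negbK.
case: (boolP (uniq t)) => ut.
- rewrite orbF => xt.
  case/splitPr: xt ut => p1 p2 ut.
  exists p1, x, p2, [::]; split.
    by rewrite rcons_cat rcons_cons cats1.
  by move: ut; rewrite cat_uniq => /and3P[_ _ ->].
- move=> _; have [a [y [b [c [-> ub]]]]] := IH ut.
  exists a, y, b, (rcons c x); split => //.
  by rewrite rcons_cat rcons_cons rcons_cat rcons_cons.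
Qed.

Lemma walk_S {R : realType} {n nd : nat} (W : 'I_n -> 'I_n -> 'M[R]_nd)
  (lp : nat) (sigma : 'I_n -> 'I_lp) (S : 'I_lp -> 'I_lp -> 'M[R]_nd) (x0 : 'I_n) :
  coherent W -> (forall i, edge W i i -> Rt W i i = 1%:M) -> part_trans W sigma S ->
  forall s, wk W s -> walk_trans W s = S (sigma (head x0 s)) (sigma (last x0 s)).
Proof.
move=> coh selfl HS s.
have [k] := ubnP (size s); elim: k s => // k IH s sk ws.
case: (boolP (uniq s)) => us.
  case: s sk ws us => [//|u p] _ ws us.
  apply: (HS _ _ u (last u p)) => //.
  by exists p; split.
have [a [y [b [c [es ub]]]]] := @dup_split _ s us.
move: ws; rewrite es wk_cat => /andP[wa]; rewrite -cat_cons wk_cat => /andP[wcyc wc].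
have cyc1 : walk_trans W (rcons (y :: b) y) = 1%:M.
  case: b ub wcyc {es} => [|z b] ub wcyc.
    rewrite [rcons _ _]/= wt_cons wt_single mulmx1; apply: selfl.
    by move: wcyc => /= /andP[].
  rewrite rcons_cons; apply: coh => //.
have -> : walk_trans W (a ++ (y :: b) ++ y :: c) = walk_trans W (a ++ y :: c).
  by rewrite cat_cons wt_cat -cat_cons wt_cat cyc1 mul1mx -wt_cat.
rewrite IH.
- congr (S (sigma _) (sigma _)).
    by case: a {wa es}.
  by rewrite !last_cat /=.
- by move: sk; rewrite es !size_cat /= size_cat /=; lia.
- by rewrite wk_cat wa wc.
Qed.


Lemma spec_norm_orth {R : realType} {nd : nat} (A : 'M[R]_nd) (c : R) :
  (0 < nd)%N -> A^T *m A = c%:M -> spec_norm A = Num.sqrt c.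
Proof.
move=> ndp hA.
have sq : forall v : 'cV[R]_nd, \sum_k (v k 0) ^+ 2 = (v^T *m v) 0 0.
  by move=> v; rewrite mxE; apply: eq_bigr => k _; rewrite mxE expr2.
have key : forall x : 'cV[R]_nd, vnorm2 x = 1 -> vnorm2 (A *m x) = Num.sqrt c.
  move=> x hx; rewrite /vnorm2 sq trmx_mul -mulmxA (mulmxA A^T) hA mul_scalar_mx.
  rewrite -scalemxAr mxE -sq.
  have : Num.sqrt (\sum_k (x k 0) ^+ 2) ^+ 2 = 1 by rewrite /vnorm2 in hx; rewrite hx expr1n.
  rewrite sqr_sqrtr; last by apply: sumr_ge0 => k _; apply: sqr_ge0.
  by move=> ->; rewrite mulr1.
rewrite /spec_norm (_ : [set _ | x in _] = [set Num.sqrt c]) ?sup1 //.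
apply/seteqP; split => [_ [x /= hx <-] | _ ->] /=; first exact: key.
pose k0 : 'I_nd := Ordinal ndp.
have hd : vnorm2 (delta_mx k0 (0 : 'I_1) : 'cV[R]_nd) = 1.
  rewrite /vnorm2 (bigD1 k0) //= big1 ?addr0.
    by rewrite mxE !eqxx expr1n sqrtr1.
  by move=> k /negbTE kk; rewrite mxE kk expr0n.
by exists (delta_mx k0 0) => //; apply: key.
Qed.

Lemma weight_facts {R : realType} {n nd : nat} (W : 'I_n -> 'I_n -> 'M[R]_nd) i j :
  (0 < nd)%N -> (forall i j, W i j = (W j i)^T) ->
  (edge W i j -> Rt W i j *m Rt W j i = 1%:M) ->
  [/\ wgt W i j = wgt W j i, 0 <= wgt W i j & (edge W i j <-> wgt W i j != 0)].
Proof.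
move=> ndp Wsym hR.
set A := W i j.
have WjiE : W j i = A^T by rewrite /A (Wsym i j) trmxK.
have one_neq0 : (1%:M : 'M[R]_nd) != 0.
  apply/negP => /eqP/matrixP/(_ (Ordinal ndp) (Ordinal ndp)).
  by rewrite !mxE eqxx /= => /eqP; rewrite oner_eq0.
case: (boolP (edge W i j)) => eij.
- have := hR eij; rewrite /Rt WjiE -/A -scalemxAl -scalemxAr scalerA.
  set k := _ * _ => hk.
  have k0 : k != 0.
    by apply: contraNneq one_neq0 => k0; rewrite -hk k0 scale0r.
  have h1 : A *m A^T = k^-1%:M.
    by rewrite -scalemx1 -hk scalerA mulVf // scale1r.
  have h2 : A^T *m A = k^-1%:M.
    have : (k *: A) *m A^T = 1%:M by rewrite -scalemxAl.
    move/mulmx1C; rewrite -scalemxAr => h.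
    by rewrite -scalemx1 -h scalerA mulVf // scale1r.
  have w1 : wgt W i j = Num.sqrt k^-1 by rewrite /wgt -/A; exact: spec_norm_orth.
  have w2 : wgt W j i = Num.sqrt k^-1.
    by rewrite /wgt WjiE; apply: spec_norm_orth; rewrite // trmxK.
  split.
  + by rewrite w1 w2.
  + by rewrite w1 sqrtr_ge0.
  + split => // _.
    apply: contra k0 => /eqP w0.
    by rewrite /k -/(wgt W i j) w0 invr0 mul0r.
- have A0 : A = 0 by apply/eqP; move: eij; rewrite /edge negbK.
  have z : forall B : 'M[R]_nd, B = 0 -> spec_norm B = 0.
    move=> B ->; rewrite (@spec_norm_orth _ _ 0 0) ?sqrtr0 //.
    by rewrite mulmx0; apply/matrixP => a b; rewrite !mxE mul0rn.
  have w1 : wgt W i j = 0 by rewrite /wgt -/A; apply: z.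
  have w2 : wgt W j i = 0 by rewrite /wgt WjiE; apply: z; rewrite A0 trmx0.
  split.
  + by rewrite w1 w2.
  + by rewrite w1.
  + by split => //; rewrite w1 eqxx.
Qed.


Theorem proposition3 (R : realType) (n nd : nat) (W : 'I_n -> 'I_n -> 'M[R]_nd)
  (Wsym : forall i j, W i j = (W j i)^T)
  (Gconn : connected_graph W)
  (Gcoh : coherent W)
  (lp : nat) (sigma : 'I_n -> 'I_lp.+1) (S : 'I_lp.+1 -> 'I_lp.+1 -> 'M[R]_nd)
  (Hpart : coherent_partition W sigma)
  (HS : part_trans W sigma S)
  (y : R -> 'I_n -> 'cV[R]_nd)
  (Hy : consensus_solution W y) :
  let ybar := \sum_(i < n) S ord0 (sigma i) *m y 0 i in
  forall j : 'I_n,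
    y t j @[t --> +oo] --> (n%:R)^-1 *: (S (sigma j) ord0 *m ybar).
Proof.
move=> ybar j.
have [nd0|ndp] := posnP nd.
  have e : forall v w : 'cV[R]_nd, v = w.
    by move=> v w; apply/matrixP => a b; have := ltn_ord a; rewrite {2}nd0.
  have -> : (fun t => y t j) = (fun _ => (n%:R)^-1 *: (S (sigma j) ord0 *m ybar)).
    by apply/funext => t; apply: e.
  exact: cvg_cst.
case: Hpart => surj selfl _ _.
have selfl' : forall i, edge W i i -> Rt W i i = 1%:M.
  by move=> i eii; apply: selfl.
have [v0 sv0] := surj ord0.
pose D i := S (sigma i) ord0.
pose E i := S ord0 (sigma i).
have WS := @walk_S R n nd W lp.+1 sigma S v0 Gcoh selfl' HS.
have walk_ex : forall u v, exists p, path (edge W) u p /\ last u p = v.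
  by move=> u v; have /connectP [p pp lp'] := Gconn u v; exists p.
have Sdiag : forall i, S (sigma i) (sigma i) = 1%:M.
  move=> i; symmetry; apply: (HS _ _ i i [:: i]) => //.
  by exists [::]; split.
have F1 : forall i k, edge W i k -> E i *m Rt W i k = E k.
  move=> i k eik; have [p [pp lp']] := walk_ex v0 i.
  have w1 : walk_trans W (v0 :: p) = E i by rewrite (WS (v0 :: p)) //= sv0 lp'.
  have w2 : walk_trans W (v0 :: rcons p k) = E k.
    rewrite (WS (v0 :: rcons p k)) /= ?last_rcons ?sv0 //.
    by rewrite rcons_path pp lp' eik.
  by rewrite -w1 -w2 wt_rcons lp'.
have F2 : forall i, D i *m E i = 1%:M.
  move=> i; have [p1 [pp1 lp1]] := walk_ex i v0; have [p2 [pp2 lp2]] := walk_ex v0 i.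
  have w1 : walk_trans W (i :: p1) = D i by rewrite (WS (i :: p1)) //= lp1 sv0.
  have w2 : walk_trans W (v0 :: p2) = E i by rewrite (WS (v0 :: p2)) //= sv0 lp2.
  have w3 : walk_trans W (i :: p1 ++ p2) = 1%:M.
    rewrite (WS (i :: p1 ++ p2)) /=; last by rewrite cat_path pp1 lp1 pp2.
    by rewrite last_cat lp1 lp2 Sdiag.
  by rewrite -w1 -w2 -lp1 -w3 wt_catp.
have hR : forall i k, edge W i k -> Rt W i k *m Rt W k i = 1%:M.
  move=> i k eik; have [ik|ik] := eqVneq i k.
    by subst k; rewrite (selfl' _ eik) mulmx1.
  have := Gcoh i [:: k] isT.
  rewrite [rcons _ _]/= wt_cons wt_cons wt_single mulmx1; apply => /=.
    by rewrite inE ik.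
  by rewrite /= eik andbT /edge; apply/negP => /eqP h; move: eik; rewrite /edge Wsym h trmx0 eqxx.
have WF := fun i k => @weight_facts R n nd W i k ndp Wsym (hR i k).
have wsym : forall i k, wgt W i k = wgt W k i by move=> i k; case: (WF i k).
have wpos : forall i k, 0 <= wgt W i k by move=> i k; case: (WF i k).
have wedge : forall i k, wgt W i k != 0 -> edge W i k.
  by move=> i k; case: (WF i k) => _ _ h; exact: h.2.
have conn : forall u v, connect (fun i k => 0 < wgt W i k) u v.
  move=> u v; apply: (@connect_sub _ (edge W) _ _ u v (Gconn u v)) => x z exz.
  apply: connect1; case: (WF x z) => _ w0 [h _]; by rewrite lt_def (h exz) w0.
have cons : forall l : 'I_nd, (fun t => (E j *m y t j) l 0) @ +oo -->
    n%:R^-1 * \sum_i (E i *m y 0 i) l 0.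
  move=> l.
  apply: (@consensus_scalar R n (wgt W) (fun i t => (E i *m y t i) l 0) wsym wpos conn _ _ j).
  - move=> i t t0.
    have h := @is_derive_mulmx_entry R _ _ (E i) (fun s => y s i) t _ l (proj1 Hy i t t0).
    apply: is_derive_eq h _.
    rewrite mulmx_sumr summxE; apply: eq_bigr => k _.
    rewrite -scalemxAr mxE.
    have [w0|wn0] := eqVneq (wgt W i k) 0; first by rewrite w0 !mul0r.
    by rewrite mulmxBr mulmxA F1 ?wedge // !mxE.
  - move=> i.
    have -> : (fun s => (E i *m y s i) l 0) = (fun s => \sum_m E i l m * y s i m 0).
      by apply/funext => s; rewrite mxE.
    rewrite mxE; apply: cvg_sumR => m'; apply: cvgM; first exact: cvg_cst.
    exact: (@cvg_entry R _ _ _ _ _ (fun s => y s i) (y 0 i) m' 0 (proj2 Hy i)).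
apply: mx_cvg_entries => k' z; rewrite [z]ord1.
have -> : (fun t => y t j k' 0) = (fun t => \sum_l D j k' l * (E j *m y t j) l 0).
  apply/funext => t.
  have yeq : y t j = D j *m (E j *m y t j) by rewrite mulmxA F2 mul1mx.
  by rewrite {1}yeq mxE.
have -> : ((n%:R)^-1 *: (S (sigma j) ord0 *m ybar)) k' 0 =
    \sum_l D j k' l * (n%:R^-1 * \sum_i (E i *m y 0 i) l 0).
  rewrite mxE [X in _ * X]mxE mulr_sumr; apply: eq_bigr => l _.
  by rewrite /ybar /D /E summxE; ring.
apply: cvg_sumR => l; apply: cvgM; first exact: cvg_cst.
exact: cons.
Qed.
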